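(* Let $S\subset\mathbb{R}^d$ be a $d$-simplex that is lattice complete with respect to a $d$-dimensional lattice $\Lambda$. Then the diameter directions of $S$ span $\mathbb{R}^d$.
   Context: A lattice $\Lambda\subset\mathbb{R}^d$ is a discrete subgroup spanning $\mathbb{R}^d$. A segment $[a,b]$ is a lattice segment if $b-a$ is parallel to a nonzero vector of $\Lambda$; its lattice length is $|b-a|/|v|$ where $v$ generates $\Lambda\cap\mathrm{span}\{b-a\}$ and is a positive multiple of $b-a$. For a convex body $C$ (compact convex, non-empty interior), $\mathrm{diam}_\Lambda(C)$ is the maximum lattice length of a lattice segment in $C$; a diameter direction of $C$ is a $v\in\Lambda\setminus\{0\}$ such that $C$ contains a segment $[a,a+\mathrm{diam}_\Lambda(C)v]$. $C$ is lattice complete if no convex body $C'\supsetneq C$ has $\mathrm{diam}_\Lambda(C')=\mathrm{diam}_\Lambda(C)$. *)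

(* Defs.v *)
From HB Require Import structures.
From mathcomp Require Import all_boot all_order all_algebra.
From mathcomp Require Import all_classical all_reals all_analysis.
Set Implicit Arguments. Unset Strict Implicit. Unset Printing Implicit Defensive.
Import Order.TTheory GRing.Theory Num.Theory.
Import numFieldNormedType.Exports.
Local Open Scope classical_set_scope.
Local Open Scope ring_scope.

Section Defs.
Variables (R : realType) (d : nat).
Notation V := 'rV[R]_d.

Definition lattice_of (B : 'M[R]_d) : set V :=
  [set v | exists z : 'rV[R]_d, (forall j, z 0 j \is a Num.int) /\ v = z *m B].

Definition convex (C : set V) : Prop :=
  forall x y s, C x -> C y -> 0 <= s <= 1 -> C ((1 - s) *: x + s *: y).

Definition convex_body (C : set V) : Prop :=
  compact C /\ convex C /\ (interior C !=set0).

Definition segment (a b : V) : set V :=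
  [set a + s *: (b - a) | s in [set s : R | 0 <= s <= 1]].

(* v is nonzero and generates the group Lambda ∩ span{v}:
   every lattice point t v on the line is an integer multiple of v *)
Definition primitive (L : set V) (v : V) : Prop :=
  L v /\ v != 0 /\ forall t : R, L (t *: v) -> t \is a Num.int.

Definition lattice_segment_length (L : set V) (a b : V) (t : R) : Prop :=
  exists v, primitive L v /\ 0 < t /\ b - a = t *: v.

(* lattice diameter: the maximum (here: supremum, which is attained for
   convex bodies) of lattice lengths of lattice segments contained in C *)
Definition lattice_diam (L : set V) (C : set V) : R :=
  sup [set t | exists a b, segment a b `<=` C /\ lattice_segment_length L a b t].

Definition diameter_direction (L : set V) (C : set V) (v : V) : Prop :=
  L v /\ v != 0 /\ exists a, segment a (a + lattice_diam L C *: v) `<=` C.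

Definition lattice_complete (L : set V) (C : set V) : Prop :=
  convex_body C /\
  forall C' : set V, convex_body C' -> C `<=` C' -> C' <> C ->
    lattice_diam L C' <> lattice_diam L C.

(* d-simplex: convex hull of d+1 affinely independent points *)
Definition simplex (S : set V) : Prop :=
  exists p : 'I_d.+1 -> V,
    (\matrix_(i < d, j < d) (p (lift ord0 i) - p ord0) 0 j) \in unitmx /\
    S = [set x | exists l : 'I_d.+1 -> R,
           (forall i, 0 <= l i) /\ \sum_i l i = 1 /\ x = \sum_i l i *: p i].

Definition spans (A : set V) : Prop :=
  forall x : V, exists n (c : 'I_n -> R) (w : 'I_n -> V),
    (forall i, A (w i)) /\ x = \sum_i c i *: w i.

End Defs.

(* Main.v *)
Require Import Defs.
From HB Require Import structures.
From mathcomp Require Import all_boot all_order all_algebra.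
From mathcomp Require Import all_classical all_reals all_analysis.
Import Order.TTheory GRing.Theory Num.Theory.
Import numFieldNormedType.Exports.
From mathcomp Require Import ring lra.
Local Open Scope classical_set_scope.
Local Open Scope ring_scope.
Set Implicit Arguments. Unset Strict Implicit.

Section Bary.
Variables (R : realType) (d : nat) (p : 'I_d.+1 -> 'rV[R]_d).

Definition Pm : 'M[R]_d := \matrix_(i < d, j < d) (p (lift ord0 i) - p ord0) 0 j.
Definition hh (i : 'I_d.+1) (v : 'rV[R]_d) : R :=
  match unlift ord0 i with
  | Some j => (v *m invmx Pm) 0 j
  | None => - \sum_j (v *m invmx Pm) 0 j end.
Definition gg (i : 'I_d.+1) (x : 'rV[R]_d) : R := (i == ord0)%:R + hh i (x - p ord0).

Lemma hh_lift j v : hh (lift ord0 j) v = (v *m invmx Pm) 0 j.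
Proof. by rewrite /hh liftK. Qed.
Lemma hh0 v : hh ord0 v = - \sum_j (v *m invmx Pm) 0 j.
Proof. by rewrite /hh unlift_none. Qed.

Lemma hhD i u w : hh i (u + w) = hh i u + hh i w.
Proof.
rewrite /hh; case: (unlift ord0 i) => [j|]; rewrite mulmxDl.
  by rewrite mxE.
by rewrite -opprD -big_split /=; congr (- _); apply: eq_bigr => j _; rewrite mxE.
Qed.

Lemma hhZ i t u : hh i (t *: u) = t * hh i u.
Proof.
rewrite /hh; case: (unlift ord0 i) => [j|]; rewrite -scalemxAl.
  by rewrite mxE.
by rewrite mulrN mulr_sumr; congr (- _); apply: eq_bigr => j _; rewrite mxE.
Qed.

Lemma hhN i u : hh i (- u) = - hh i u.
Proof. by rewrite -scaleN1r hhZ mulN1r. Qed.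

Lemma hhB i u w : hh i (u - w) = hh i u - hh i w.
Proof. by rewrite hhD hhN. Qed.

Lemma sum_hh v : \sum_i hh i v = 0.
Proof.
rewrite big_ord_recl hh0; under [X in _ + X]eq_bigr do rewrite hh_lift.
by rewrite addNr.
Qed.

Lemma gg_affine i a t v : gg i (a + t *: v) = gg i a + t * hh i v.
Proof. by rewrite /gg (addrAC a) [in LHS]hhD hhZ addrA. Qed.

Lemma gg_diff i x y : gg i y - gg i x = hh i (y - x).
Proof.
rewrite /gg opprD addrACA subrr add0r -hhB; congr hh.
by rewrite opprB addrA subrK.
Qed.

Lemma sum_ind : \sum_(i < d.+1) ((i == ord0)%:R : R) = 1.
Proof.
by rewrite big_ord_recl eqxx big1 ?addr0.
Qed.

Lemma sum_gg x : \sum_i gg i x = 1.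
Proof. by rewrite big_split /= sum_ind sum_hh addr0. Qed.

Lemma row_Pm j : row j Pm = p (lift ord0 j) - p ord0.
Proof. by apply/rowP => l; rewrite !mxE. Qed.

Hypothesis Pu : Pm \in unitmx.

Lemma gg_sum x : x = \sum_i gg i x *: p i.
Proof.
set w := x - p ord0.
have E1 : \sum_i gg i x *: p i = p ord0 + \sum_i hh i w *: (p i - p ord0).
  under eq_bigr do rewrite /gg scalerDl.
  rewrite big_split /=.
  under [X in _ = _ + X]eq_bigr do rewrite scalerBr.
  rewrite sumrB -scaler_suml sum_hh scale0r subr0; congr (_ + _).
  rewrite big_ord_recl eqxx scale1r big1 ?addr0 // => j _.
  by rewrite eq_sym (negbTE (neq_lift ord0 j)) scale0r.
rewrite E1 big_ord_recl subrr scaler0 add0r.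
under eq_bigr do rewrite hh_lift -row_Pm.
by rewrite -mulmx_sum_row mulmxKV // /w addrC subrK.
Qed.

Lemma gg_bary (l : 'I_d.+1 -> R) j : \sum_i l i = 1 -> gg j (\sum_i l i *: p i) = l j.
Proof.
move=> l1.
pose lv := \row_(j < d) l (lift ord0 j).
have Ew : \sum_i l i *: p i - p ord0 = lv *m Pm.
  rewrite mulmx_sum_row.
  have -> : \sum_i l i *: p i - p ord0 = \sum_i l i *: (p i - p ord0).
    under [RHS]eq_bigr do rewrite scalerBr.
    by rewrite sumrB -scaler_suml l1 scale1r.
  rewrite big_ord_recl subrr scaler0 add0r; apply: eq_bigr => i _.
  by rewrite row_Pm mxE.
have hl i : hh (lift ord0 i) (\sum_i l i *: p i - p ord0) = l (lift ord0 i).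
  by rewrite hh_lift Ew mulmxK // mxE.
rewrite /gg; case: (unliftP ord0 j) => [j'|] ->.
  by rewrite eq_sym (negbTE (neq_lift ord0 j')) add0r hl.
rewrite eqxx hh0; under eq_bigr do rewrite -hh_lift hl.
by move: l1; rewrite big_ord_recl => <-; rewrite addrK.
Qed.

Lemma hh_inj v : (forall i, hh i v = 0) -> v = 0.
Proof.
move=> h0; have : v *m invmx Pm = 0.
  by apply/rowP => j; rewrite [RHS]mxE -hh_lift h0.
by move=> /(congr1 (mulmx^~ Pm)); rewrite mulmxKV // mul0mx.
Qed.

Definition Ssimp := [set x | exists l : 'I_d.+1 -> R,
           (forall i, 0 <= l i) /\ \sum_i l i = 1 /\ x = \sum_i l i *: p i].

Lemma SsimpE : Ssimp = [set x | forall i, 0 <= gg i x].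
Proof.
apply/seteqP; split => x /=.
  by move=> [l [l0 [l1 ->]]] i; rewrite gg_bary.
move=> g0; exists (fun i => gg i x); split => //; split; first exact: sum_gg.
exact: gg_sum.
Qed.


Definition Nn v := \sum_(i | 0 < hh i v) hh i v.

Lemma Nn_ge0 v : 0 <= Nn v.
Proof. by apply: sumr_ge0 => i /ltW. Qed.

Lemma Nn_mkcond v : Nn v = \sum_i (if 0 < hh i v then hh i v else 0).
Proof. by rewrite /Nn big_mkcond. Qed.

Lemma Nn_ge v : \sum_(i | 0 <= hh i v) hh i v = Nn v.
Proof.
rewrite Nn_mkcond big_mkcond; apply: eq_bigr => i _.
by case: (ltrgtP 0 (hh i v)) => // ->.
Qed.

Lemma sum_norm_hh v : \sum_i `|hh i v| = 2 * Nn v.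
Proof.
have -> : \sum_i `|hh i v| = \sum_i ((if 0 < hh i v then hh i v else 0) *+ 2 - hh i v).
  apply: eq_bigr => i _; case: (ltrP 0 (hh i v)) => h.
    by rewrite gtr0_norm // mulr2n addrK.
  by rewrite ler0_norm // mul0rn add0r.
by rewrite sumrB sum_hh subr0 sumrMnl -Nn_mkcond mulr_natl.
Qed.

Lemma Nn_pos v : v != 0 -> 0 < Nn v.
Proof.
move=> vn0; rewrite lt_neqAle Nn_ge0 andbT; apply: contra vn0 => /eqP N0.
apply/eqP/hh_inj => i.
have hle j : hh j v <= 0.
  rewrite leNgt; apply/negP => hj.
  have H1 : forall j, 0 < hh j v -> 0 <= hh j v by move=> j' /ltW.
  have : hh j v = 0 by apply: (psumr_eq0P H1 (esym N0)).
  by move=> /eqP; rewrite gt_eqF.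
have H0 : forall j, predT j -> 0 <= - hh j v by move=> j _; rewrite oppr_ge0.
have S0 : \sum_(j | predT j) - hh j v = 0 by rewrite sumrN sum_hh oppr0.
have : - hh i v = 0 by apply: (psumr_eq0P H0 S0).
by move=> /eqP; rewrite oppr_eq0 => /eqP.
Qed.

Definition lam (I : pred 'I_d.+1) x := \sum_(i | I i) gg i x.

Lemma lam_diff I x y : lam I y - lam I x = \sum_(i | I i) hh i (y - x).
Proof. by rewrite /lam -sumrB; apply: eq_bigr => i _; rewrite gg_diff. Qed.

Lemma term_le_sum (I : finType) (F : I -> R) i : (forall j, 0 <= F j) -> F i <= \sum_j F j.
Proof. by move=> F0; rewrite (bigD1 i) //= lerDl sumr_ge0. Qed.

Definition Kl (B : 'M[R]_d) := 2 * \sum_l \sum_j `|(Pm *m invmx B) l j|.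

Lemma Kl_ge0 B : 0 <= Kl B.
Proof. by rewrite mulr_ge0 //; apply: sumr_ge0 => l _; apply: sumr_ge0. Qed.

Lemma lattice_bound (B : 'M[R]_d) (z : 'rV[R]_d) (j : 'I_d) : B \in unitmx ->
  `|z 0 j| <= Kl B * Nn (z *m B).
Proof.
move=> Bu; set v := z *m B; set E := Pm *m invmx B; set M := \sum_l \sum_j `|E l j|.
have zE : z = (v *m invmx Pm) *m E by rewrite /E mulmxA mulmxKV // /v mulmxK.
have hM l : `|E l j| <= M.
  have h1 := @term_le_sum _ (fun j => `|E l j|) j (fun _ => normr_ge0 _).
  have h2 := @term_le_sum _ (fun l => \sum_j `|E l j|) l (fun l' => sumr_ge0 _ (fun _ _ => normr_ge0 _)).
  exact: le_trans h1 h2.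
rewrite zE mxE; apply: le_trans (ler_norm_sum _ _ _) _.
apply: le_trans (_ : \sum_l `|(v *m invmx Pm) 0 l| * M <= _).
  by apply: ler_sum => l _; rewrite normrM ler_wpM2l.
rewrite -mulr_suml /Kl -/M mulrAC; apply: ler_wpM2r.
  by apply: sumr_ge0 => l _; apply: sumr_ge0.
rewrite -sum_norm_hh big_ord_recl; under [X in _ <= _ + X]eq_bigr do rewrite hh_lift.
by rewrite lerDr.
Qed.

Definition pat k v := 0 < hh k v /\ forall i, i != k -> hh i v < 0.

Lemma span_pat (u : 'I_d.+1 -> 'rV[R]_d) : (forall k, pat k (u k)) ->
  forall x, exists c : 'I_d.+1 -> R, x = \sum_k c k *: u k.
Proof.
move=> up.
have key (z : 'cV[R]_d) : (forall k, u k *m z = 0) -> z = 0.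
  move=> uz; set y' := Pm *m z.
  have zE : z = invmx Pm *m y' by rewrite /y' mulKmx.
  pose Y i := match unlift ord0 i with Some j => y' j 0 | None => 0 end.
  have uY k : \sum_i hh i (u k) * Y i = 0.
    have := congr1 (fun M : 'M[R]_(1) => M 0 0) (uz k); rewrite /= zE mulmxA mxE [RHS]mxE => E; apply: (etrans _ E).
    rewrite big_ord_recl /Y unlift_none mulr0.
    under eq_bigr => j _ do rewrite liftK hh_lift.
    by rewrite add0r.
  have [k _ Ymax] : exists2 k, true & forall i, Y i <= Y k.
    case: (arg_maxP Y (isT : predT ord0)) => k _ H; exists k => // i.
    exact: H.
  have Yc i : Y i = Y k.
    have E0 : \sum_i hh i (u k) * (Y i - Y k) = 0.
      under eq_bigr do rewrite mulrBr.
      by rewrite sumrB uY -mulr_suml sum_hh mul0r subr0.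
    case: (eqVneq i k) => [->//|ik].
    have H2 : forall j, predT j -> 0 <= hh j (u k) * (Y j - Y k).
      move=> j _; case: (eqVneq j k) => [->|jk]; first by rewrite subrr mulr0.
      by apply: mulr_le0; [apply/ltW/(up k).2 | rewrite subr_le0].
    have : hh i (u k) * (Y i - Y k) = 0 by apply: (psumr_eq0P H2 E0).
    move=> /eqP; rewrite mulf_eq0 => /orP[|]; first by rewrite lt_eqF // ((up k).2 i ik).
    by rewrite subr_eq0 => /eqP.
  have Y0 i : Y i = 0 by rewrite Yc -(Yc ord0) /Y unlift_none.
  have y0 : y' = 0.
    apply/matrixP => i j; rewrite ord1 [RHS]mxE.
    by have := Y0 (lift ord0 i); rewrite /Y liftK.
  by rewrite zE y0 mulmx0.
pose U := \matrix_k u k.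
have rf : row_free U^T.
  rewrite -kermx_eq0; apply/eqP/row_matrixP => i; rewrite row0.
  set r := row i (kermx U^T).
  have rU : r *m U^T = 0 by apply/sub_kermxP; exact: row_sub.
  apply: trmx_inj; rewrite trmx0; apply: key => k.
  have := congr1 (fun M => row k M) (congr1 trmx rU).
  by rewrite /= trmx_mul trmxK row_mul rowK trmx0 row0.
have rfu : row_full U by rewrite /row_full -mxrank_tr.
move=> x; have /submxP [D ->] : (x <= U)%MS by apply: submx_full.
exists (fun k => D 0 k); rewrite mulmx_sum_row; apply: eq_bigr => k _.
by rewrite rowK.
Qed.

End Bary.

Section Main.
Variables (R : realType) (d : nat) (B : 'M[R]_d) (p : 'I_d.+1 -> 'rV[R]_d).
Hypotheses (Bu : B \in unitmx) (Pu : Pm p \in unitmx).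

Notation L := (lattice_of B).
Notation S := (Ssimp p).
Notation g := (gg p).
Notation h := (hh p).
Notation N := (Nn p).

Lemma addKl' (a w : 'rV[R]_d) : a + w - a = w.
Proof. by rewrite addrAC subrr add0r. Qed.

Lemma seg_ends a b (C : set 'rV[R]_d) : segment a b `<=` C -> C a /\ C b.
Proof.
move=> sC; split; apply: sC.
  by exists 0; [rewrite /= lexx ler01 | rewrite scale0r addr0].
by exists 1; [rewrite /= lexx ler01 | rewrite scale1r addrC subrK].
Qed.

Lemma lat_ne0_N v : L v -> v != 0 -> 1 <= Kl p B * N v.
Proof.
move=> [z [zi ->]] vn0.
have zn0 : z != 0 by apply: contra vn0 => /eqP ->; rewrite mul0mx.
have [j zj] : exists j, z 0 j != 0.
  apply/existsP; apply: contraR zn0 => /existsPn zj; apply/eqP/rowP => j.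
  by rewrite mxE; apply/eqP/negPn/zj.
apply: le_trans (lattice_bound Pu _ j Bu).
exact: norm_intr_ge1.
Qed.

Lemma S_lam (I : pred 'I_d.+1) x : S x -> 0 <= lam p I x <= 1.
Proof.
rewrite SsimpE // => /= g0; apply/andP; split; first by apply: sumr_ge0.
rewrite -(sum_gg p x) [X in _ <= X](bigID I) /= lerDl.
by apply: sumr_ge0.
Qed.

Lemma chord_lam (I : pred 'I_d.+1) a t v :
  lam p I (a + t *: v) - lam p I a = t * \sum_(i | I i) h i v.
Proof.
rewrite lam_diff addrC addKr mulr_sumr; apply: eq_bigr => i _.
by rewrite hhZ.
Qed.

Lemma chord_S v : v != 0 -> exists a, segment a (a + (N v)^-1 *: v) `<=` S.
Proof.
move=> vn0; have Np := Nn_pos Pu vn0.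
pose l i := (if h i v < 0 then - h i v else 0) / N v.
have l1 : \sum_i l i = 1.
  rewrite -mulr_suml -big_mkcond /=.
  have : \sum_i h i v = 0 := sum_hh p v.
  rewrite (bigID (fun i => 0 <= h i v)) /= Nn_ge => /eqP; rewrite addr_eq0 => /eqP E.
  have -> : \sum_(i | h i v < 0) - h i v = - \sum_(i | ~~ (0 <= h i v)) h i v.
    by rewrite -sumrN; apply: eq_bigl => i; rewrite ltNge.
  by rewrite -E mulfV // gt_eqF.
exists (\sum_i l i *: p i) => _ [s /andP[s0 s1] <-].
rewrite SsimpE // => i /=; rewrite addKl' scalerA gg_affine // gg_bary //.
rewrite /l; set Ni := (N v)^-1; have Ni0 : 0 < Ni by rewrite invr_gt0.
case: ltP => hv.
  have H : 0 <= Ni * (- h i v) by rewrite mulr_ge0 ?ltW // oppr_gt0.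
  nra.
by rewrite mul0r add0r !mulr_ge0 // ltW.
Qed.

Definition TS (C : set 'rV[R]_d) :=
  [set t | exists a b, segment a b `<=` C /\ lattice_segment_length L a b t].

Lemma TS_sub C C' : C `<=` C' -> TS C `<=` TS C'.
Proof.
move=> CC' t [a [b [sC ls]]]; exists a, b; split => //.
by move=> x /sC /CC'.
Qed.

Lemma TS_S_ub t : TS S t -> t <= Kl p B.
Proof.
move=> [a [b [sS [v [[Lv [vn0 _]] [t0 ba]]]]]].
have [Sa Sb] := seg_ends sS.
pose I := fun i => 0 < h i v.
have E : lam p I b - lam p I a = t * N v.
  have bE : b = a + t *: v by rewrite -ba addrC subrK.
  by rewrite bE chord_lam.
have /andP[a0 _] := S_lam I Sa; have /andP[_ b1] := S_lam I Sb.
have tN1 : t * N v <= 1 by rewrite -E; lra.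
have := lat_ne0_N Lv vn0.
have K0 := Kl_ge0 p B.
have N0 := Nn_ge0 p v.
nra.
Qed.

Lemma TS_S_has_ub : has_ubound (TS S).
Proof. by exists (Kl p B) => t /TS_S_ub. Qed.

Lemma prim_in_TS v : primitive L v -> TS S (N v)^-1.
Proof.
move=> pv; have [Lv [vn0 _]] := pv.
have [a sa] := chord_S vn0.
exists a, (a + (N v)^-1 *: v); split => //; exists v; split => //; split.
  by rewrite invr_gt0 Nn_pos.
by rewrite addKl'.
Qed.

Lemma prim_DN v : primitive L v -> 1 <= lattice_diam L S * N v.
Proof.
move=> pv; have [Lv [vn0 _]] := pv.
have Np := Nn_pos Pu vn0.
have H := ub_le_sup TS_S_has_ub (prim_in_TS pv).
have : (N v)^-1 * N v <= sup (TS S) * N v by rewrite ler_pM2r.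
by rewrite mulVf ?gt_eqF.
Qed.


Notation D := (lattice_diam L S).

Lemma prim_exists : (0 < d)%N -> exists v, primitive L v.
Proof.
move=> dpos; pose j0 := Ordinal dpos.
pose e0 : 'rV[R]_d := \row_j ((j == j0)%:R).
have e0j : e0 0 j0 = 1 by rewrite mxE eqxx.
exists (e0 *m B); split; [|split].
- by exists e0; split => // j; rewrite mxE natr_int.
- apply/eqP => /(congr1 (mulmx^~ (invmx B))); rewrite /= mulmxK // mul0mx => e00.
  by move: e0j; rewrite e00 mxE => /eqP; rewrite eq_sym oner_eq0.
- move=> t [z [zi]]; rewrite scalemxAl => /(congr1 (mulmx^~ (invmx B))).
  rewrite /= !mulmxK // => /(congr1 (fun M : 'rV[R]_d => M 0 j0)) /=.
  by rewrite mxE e0j mulr1 => ->.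
Qed.

Lemma D_pos : (0 < d)%N -> 0 < D.
Proof.
move=> /prim_exists [v pv]; have H1 := prim_DN pv.
have H2 := Nn_ge0 p v; rewrite ltNge; apply/negP => D0.
have : D * N v <= 0 by rewrite mulr_le0_ge0.
lra.
Qed.

Lemma diam_neg v : diameter_direction L S v -> diameter_direction L S (- v).
Proof.
move=> [[z [zi vE]] [vn0 [a sa]]]; split; [|split].
- by exists (- z); split => [j|]; rewrite ?mxE ?rpredN // vE mulNmx.
- by rewrite oppr_eq0.
- exists (a + D *: v) => _ [s /andP[s0 s1] <-]; apply: sa.
  exists (1 - s); first by rewrite /= subr_ge0 s1 lerBlDr lerDl.
  by apply/rowP => j; rewrite !mxE; ring.
Qed.

Lemma prim_diam v : primitive L v -> D * N v = 1 -> diameter_direction L S v.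
Proof.
move=> pv DN; have [Lv [vn0 _]] := pv; split => //; split => //.
have [a sa] := chord_S vn0; exists a.
have -> : D = (N v)^-1.
  have Np : N v != 0 by rewrite gt_eqF // Nn_pos.
  by apply: (mulIf Np); rewrite mulVf.
exact: sa.
Qed.

Lemma gap_seq (s : seq R) m : exists2 c, m < c & forall x, x \in s -> m < x -> c <= x.
Proof.
elim: s => [|x s [c mc H]]; first by exists (m + 1) => //; rewrite ltrDl.
case: (ltP m x) => mx.
  exists (Num.min c x); first by rewrite lt_min mc mx.
  move=> y; rewrite in_cons => /orP[/eqP ->|ys] my; first by rewrite ge_min lexx orbT.
  by rewrite ge_min H.
exists c => // y; rewrite in_cons => /orP[/eqP ->|ys] my; last exact: H.
by move: my; rewrite ltNge mx.
Qed.

Lemma gap : (0 < d)%N -> exists2 c, 1 < c & forall v, L v -> 1 < D * N v -> c <= D * N v.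
Proof.
move=> dpos; have Dp := D_pos dpos.
set Kb := 2 * Kl p B / D.
have Kb0 : 0 <= Kb.
  rewrite /Kb; apply: divr_ge0; [apply: mulr_ge0 => //; apply: Kl_ge0 | exact: ltW].
have [n Kbn] : exists n : nat, Kb < n%:R by exists (Num.bound Kb); exact: archi_boundP.
pose dec (y : {ffun 'I_d -> 'I_(n + n).+1}) : 'rV[R]_d := \row_j ((y j : nat)%:R - n%:R).
pose vals := [seq D * N (dec y *m B) | y <- enum {ffun 'I_d -> 'I_(n + n).+1}].
have [c1 c11 H1] := gap_seq vals 1.
exists (Num.min c1 2); first by rewrite lt_min c11 /=; lra.
move=> _ [z [zi ->]] DN1.
case: (leP 2 (D * N (z *m B))) => DN2; first by rewrite ge_min DN2 orbT.
rewrite ge_min; apply/orP; left; apply: H1 => //.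
have zb j : `|z 0 j| < n%:R.
  apply: le_lt_trans (lattice_bound Pu z j Bu) _; apply: le_lt_trans Kbn.
  rewrite /Kb; have K0 := Kl_ge0 p B.
  rewrite ler_pdivlMr // -mulrA (mulrC (N _)) [X in _ <= X]mulrC.
  by apply: ler_wpM2l => //; apply: ltW.
have znat j : z 0 j + n%:R \is a Num.nat.
  rewrite natrEint rpredD ?natr_int ?zi //=.
  have := zb j; rewrite ltr_norml; lra.
pose y : {ffun 'I_d -> 'I_(n + n).+1} := [ffun j => inord (Num.truncn (z 0 j + n%:R))].
have decy : dec y = z.
  apply/rowP => j; rewrite !mxE ffunE inordK ?truncnK ?addrK //.
  rewrite -(ltr_nat R) truncnK // mulrSr natrD.
  by have := zb j; rewrite ltr_norml; lra.
apply/mapP; exists y; first by rewrite mem_enum.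
by rewrite decy.
Qed.


Section Kp.
Variables (k : 'I_d.+1) (eps : R).
Hypotheses (eps0 : 0 < eps) (eps1 : eps <= 1/2).
Variable i0 : 'I_d.+1.
Hypothesis i0k : i0 != k.

Definition Kp := [set x | forall i, i != k -> 0 <= g i x /\ 0 <= g k x + eps * g i x].

Lemma S_Kp : S `<=` Kp.
Proof.
move=> x; rewrite SsimpE // => /= g0 i _; split => //.
by rewrite addr_ge0 // mulr_ge0 // ltW.
Qed.

Lemma sum_others x : \sum_(i | i != k) g i x = 1 - g k x.
Proof. by rewrite -(sum_gg p x) [in RHS](bigD1 k) //= addrAC subrr add0r. Qed.

Lemma Kp_gk_le1 x : Kp x -> g k x <= 1.
Proof.
move=> Kx; have : 0 <= \sum_(i | i != k) g i x.
  by apply: sumr_ge0 => i ik; case: (Kx i ik).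
rewrite sum_others; lra.
Qed.

Lemma Kp_gk_ge x : Kp x -> - (2 * eps) <= g k x.
Proof.
move=> Kx; have [g0 gk0] := Kx i0 i0k.
have : g i0 x <= 1 - g k x.
  rewrite -sum_others (bigD1 i0) //= lerDl; apply: sumr_ge0 => i /andP[ik _].
  by case: (Kx i ik).
move=> H.
have H1 : eps * g i0 x <= eps * (1 - g k x) by rewrite ler_wpM2l // ltW.
case: (leP 0 (g k x)) => gk.
  by apply: le_trans gk; rewrite oppr_le0 mulr_ge0 // ltW.
have H2 : (1/2) * g k x <= eps * g k x by rewrite ler_wnM2r // ltW.
lra.
Qed.

Lemma Kp_abs x i : Kp x -> `|g i x| <= 2.
Proof.
move=> Kx; have H1 := Kp_gk_le1 Kx; have H2 := Kp_gk_ge Kx.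
case: (eqVneq i k) => [->|ik].
  rewrite ler_norml; apply/andP; split; move: H1 H2 eps0 eps1; lra.
have [g0 _] := Kx i ik.
have : g i x <= 1 - g k x.
  rewrite -sum_others (bigD1 i) //= lerDl; apply: sumr_ge0 => j /andP[jk _].
  by case: (Kx j jk).
move=> H; rewrite ger0_norm //; move: H H1 H2 eps0 eps1; lra.
Qed.

Lemma Kp_lam_ge0 (I : pred 'I_d.+1) x : Kp x ->
  (~~ I k \/ exists2 i, i != k & I i) -> 0 <= lam p I x.
Proof.
move=> Kx [nIk|[i ik Ii]].
  apply: sumr_ge0 => i Ii; have ik : i != k by apply: contraNneq nIk => <-.
  by case: (Kx i ik).
case: (boolP (I k)) => Ik; last first.
  apply: sumr_ge0 => j Ij; have jk : j != k by apply: contraNneq Ik => <-.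
  by case: (Kx j jk).
rewrite /lam (bigD1 k) //= (bigD1 i) /=; last by rewrite Ii ik.
have [gi0 gk0] := Kx i ik.
have : 0 <= \sum_(j | (I j && (j != k)) && (j != i)) g j x.
  apply: sumr_ge0 => j /andP[/andP[_ jk] _]; by case: (Kx j jk).
have e1 : eps <= 1 by apply: le_trans eps1 _; lra.
have H3 : eps * g i x <= g i x by rewrite ler_piMl.
move=> H; move: H H3 gk0 gi0; lra.
Qed.

Lemma Kp_lam_le1 (I : pred 'I_d.+1) x : Kp x ->
  (I k \/ exists2 i, i != k & ~~ I i) -> lam p I x <= 1.
Proof.
move=> Kx H.
have E : lam p I x = 1 - lam p (predC I) x.
  by rewrite /lam -(sum_gg p x) [in RHS](bigID I) /= addrK.
rewrite E lerBlDr lerDl; apply: Kp_lam_ge0 => //.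
case: H => [Ik|[i ik nIi]]; [left | right; exists i] => //=.
by rewrite negbK.
Qed.

Lemma Kp_convex : convex Kp.
Proof.
move=> x y s Kx Ky /andP[s0 s1] i ik.
have E j : g j ((1 - s) *: x + s *: y) = (1 - s) * g j x + s * g j y.
  have -> : (1 - s) *: x + s *: y = x + s *: (y - x).
    by apply/rowP => l; rewrite !mxE; ring.
  rewrite gg_affine -gg_diff; ring.
have [gx kx] := Kx i ik; have [gy ky] := Ky i ik.
rewrite !E; split; nra.
Qed.

Lemma cont_sum (T : topologicalType) (I : Type) (s : seq I) (F : I -> T -> R) :
  (forall i, continuous (F i)) -> continuous (fun x => \sum_(i <- s) F i x).
Proof.
move=> Fc; elim: s => [|a s IH] /=.
  under eq_fun do rewrite big_nil. exact: cst_continuous.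
under eq_fun do rewrite big_cons.
move=> x; apply: continuousD; [exact: Fc | exact: IH].
Qed.

Lemma cont_lin (M : 'M[R]_d) j : continuous (fun v : 'rV[R]_d => (v *m M) 0 j).
Proof.
under eq_fun do rewrite mxE.
apply: cont_sum => l x; apply: continuousM; last exact: cst_continuous.
exact: coord_continuous.
Qed.

Lemma cont_h i : continuous (h i).
Proof.
rewrite (_ : h i = fun v => hh p i v) //.
rewrite /hh; case: (unlift ord0 i) => [j|].
  exact: cont_lin.
move=> x; apply: continuousN; apply: cont_sum => j; exact: cont_lin.
Qed.

Lemma cont_cadd (c : R) (f : 'rV[R]_d -> R) : continuous f -> continuous (fun y => c + f y).
Proof. move=> fc x; apply: continuousD; [exact: cst_continuous | exact: fc]. Qed.


Lemma cont_g i : continuous (fun y : 'rV[R]_d => (i == ord0)%:R + h i (y - p ord0)).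
Proof.
rewrite (_ : (fun y => _) = fun y => ((i == ord0)%:R - h i (p ord0)) + h i y).
  by apply: cont_cadd; exact: cont_h.
by apply: funext => y; rewrite hhB addrA addrAC.
Qed.

Lemma Kp_closed : closed Kp.
Proof.
have -> : Kp = \bigcap_(i in [set i | i != k])
    (g i @^-1` [set r | 0 <= r] `&` (fun x => g k x + eps * g i x) @^-1` [set r | 0 <= r]).
  apply/seteqP; split => x /=.
    by move=> Kx i ik; exact: Kx.
  by move=> H i ik; exact: H.
apply: closed_bigI => i _; apply: closedI.
  by apply: preimage_closed; [move=> x _; exact: cont_g | exact: closed_ge].
apply: preimage_closed; last exact: closed_ge.
move=> x _; apply: continuousD; first exact: cont_g.
apply: continuousM; [exact: cst_continuous | exact: cont_g].
Qed.

Lemma Kp_bounded : bounded_set Kp.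
Proof.
exists (\sum_i 2 * `|p i|); split; first exact: num_real.
move=> M HM x Kx /=.
apply: le_trans (ltW HM); rewrite {1}(gg_sum Pu x).
apply: le_trans (ler_norm_sum _ _ _) _; apply: ler_sum => i _.
by rewrite normrZ ler_wpM2r // Kp_abs.
Qed.

Lemma Kp_body : convex_body S -> convex_body Kp.
Proof.
move=> [_ [_ [x Sx]]]; split; last split.
- apply: bounded_closed_compact; [exact: Kp_bounded | exact: Kp_closed].
- exact: Kp_convex.
- by exists x; apply: (interiorS S_Kp).
Qed.

Lemma Kp_neq : (0 < d)%N -> Kp <> S.
Proof.
move=> dpos KS.
have d0 : 0 < d%:R :> R by rewrite ltr0n.
pose del := eps / d%:R.
have del0 : 0 < del by rewrite divr_gt0.
pose mu i := if i == k then - del else (1 + del) / d%:R.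
have smu : \sum_i mu i = 1.
  rewrite (bigD1 k) //= /mu eqxx.
  rewrite (eq_bigr (fun=> (1 + del) / d%:R)); last by move=> i /negbTE ->.
  have mn (y : R) : y *+ d = y * d%:R by rewrite mulr_natr.
  rewrite sumr_const cardC1 card_ord /= mn -mulrA mulVf ?gt_eqF // mulr1.
  by rewrite addrC addrK.
have Kx : Kp (\sum_i mu i *: p i).
  move=> i ik; rewrite !gg_bary // /mu eqxx (negbTE ik); split.
    by rewrite divr_ge0 ?ltW // addr_gt0 ?ltr01.
  have : eps * ((1 + del) / d%:R) = del * (1 + del) by rewrite /del mulrAC mulrA.
  move=> ->; have := del0; nra.
move: Kx; rewrite KS SsimpE // => /(_ k); rewrite gg_bary // /mu eqxx oppr_ge0.
by rewrite leNgt del0.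
Qed.

Lemma Kp_bound (dpos : (0 < d)%N)
  (nopat : forall u, diameter_direction L S u -> ~ pat p k u) (c : R)
  (gapH : forall v, L v -> 1 < D * N v -> c <= D * N v) (epsc : 1 + 2 * eps <= c) t :
  TS Kp t -> t <= D.
Proof.
move=> [a [b [sK [v [pv [t0 ba]]]]]].
have [Lv [vn0 _]] := pv.
have [Ka Kb] := seg_ends sK.
have bE : b = a + t *: v by rewrite -ba addrC subrK.
have DN := prim_DN pv; have Np := Nn_pos Pu vn0; have Dp := D_pos dpos.
have fin1 : t * N v <= 1 -> t <= D.
  move=> H; rewrite -(ler_pM2r Np); move: H DN; lra.
have fin2 : 1 < D * N v -> t * N v <= 1 + 2 * eps -> t <= D.
  move=> H1 H2; have H3 := gapH v Lv H1; rewrite -(ler_pM2r Np); move: H2 H3 epsc; lra.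
have notdiam : ~ diameter_direction L S v -> 1 < D * N v.
  move=> nd; rewrite lt_neqAle DN andbT; apply/eqP => E; apply: nd.
  by apply: prim_diam => //; rewrite E.
have gkb := Kp_gk_le1 Kb; have gka := Kp_gk_ge Ka.
have gka1 := Kp_gk_le1 Ka; have gkb2 := Kp_gk_ge Kb.
have gE : g k b = g k a + t * h k v by rewrite bE gg_affine.
case: (pselect (pat p k v)) => [pk|npk].
  apply: fin2; first by apply: notdiam => /nopat.
  have -> : N v = h k v.
    rewrite /Nn (eq_bigl (pred1 k)) ?big_pred1_eq // => i /=.
    case: eqVneq => [->|ik]; first exact: pk.1.
    by apply/negbTE; rewrite -leNgt; apply: ltW; exact: pk.2 i ik.
  by move: gE gkb gka; lra.
case: (pselect (pat p k (- v))) => [pk'|npk'].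
  apply: fin2.
    apply: notdiam => /diam_neg /nopat; exact.
  have -> : N v = - h k v.
    have hv i : h i (- v) = - h i v by rewrite hhN.
    rewrite /Nn (eq_bigl (fun i => i != k)); last first.
      move=> i /=; case: eqVneq => [->|ik].
        by apply/negbTE; rewrite -leNgt; apply: ltW; rewrite -oppr_gt0 -hv; exact: pk'.1.
      by rewrite -oppr_lt0 -hv; exact: pk'.2 i ik.
    have := sum_hh p v; rewrite (bigD1 k) //= => /eqP; rewrite addr_eq0 => /eqP ->.
    by rewrite opprK.
  by move: gE gka1 gkb2; lra.
apply: fin1.
have use (I : pred 'I_d.+1) : \sum_(i | I i) h i v = N v ->
    (~~ I k \/ exists2 i, i != k & I i) -> (I k \/ exists2 i, i != k & ~~ I i) ->
    t * N v <= 1.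
  move=> SI c1 c2; have := chord_lam I a t v; rewrite -bE SI => E.
  have := Kp_lam_ge0 Ka c1; have := Kp_lam_le1 Kb c2; move: E; lra.
have I1 : \sum_(i | 0 < h i v) h i v = N v by [].
have I2 := Nn_ge p v.
case: (ltgtP (h k v) 0) => hk.
- apply: (use _ I1); first by left; rewrite -leNgt ltW.
  right; case: (pselect (exists2 i, i != k & ~~ (0 < h i v))) => // nex.
  exfalso; apply: npk'; split; first by rewrite hhN oppr_gt0.
  move=> i ik; rewrite hhN oppr_lt0; apply: contra_notT nex => H.
  by exists i.
- apply: (use _ I2); last by left; apply: ltW.
  right; case: (pselect (exists2 i, i != k & 0 <= h i v)) => // nex.
  exfalso; apply: npk; split => // i ik; rewrite ltNge; apply/negP => H.
  by apply: nex; exists i.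
- case: (pselect (exists2 i, i != k & 0 <= h i v)) => [ex|nex].
    by apply: (use _ I2); [right | left; rewrite hk].
  apply: (use _ I1); first by left; rewrite hk ltxx.
  right; exists i0 => //; rewrite -leNgt; apply/ltW; rewrite ltNge; apply/negP => H.
  by apply: nex; exists i0.
Qed.

End Kp.

End Main.

Unset Implicit Arguments.
Set Strict Implicit.

Theorem proposition4p3 (R : realType) (d : nat) (B : 'M[R]_d) (S : set 'rV[R]_d) :
  B \in unitmx ->
  simplex S ->
  lattice_complete (lattice_of B) S ->
  spans (diameter_direction (lattice_of B) S).
Proof.
move=> Bu [p [Pu SE]] [cb comp].
have Pu' : Pm p \in unitmx := Pu.
have SE' : S = Ssimp p := SE.
subst S.
case: (posnP d) => [d0|dpos].
  subst d => x; exists 0%N, (fun _ => 0), (fun _ => 0); split; first by case.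
  by rewrite big_ord0; apply/rowP => -[].
case: (pselect (forall k, exists u, diameter_direction (lattice_of B) (Ssimp p) u /\ pat p k u)) => [H|H].
  have [u Hu] := fin_all_exists H.
  move=> x; have [c xE] := span_pat Pu' (fun k => (Hu k).2) x.
  by exists d.+1, c, u; split => // i; exact: (Hu i).1.
exfalso.
have [k nk] : exists k, ~ exists u, diameter_direction (lattice_of B) (Ssimp p) u /\ pat p k u.
  by apply/existsNP.
have nopat : forall u, diameter_direction (lattice_of B) (Ssimp p) u -> ~ pat p k u.
  by move=> u du pu; apply: nk; exists u.
have [i0 i0k] : exists i0 : 'I_d.+1, i0 != k.
  case: (eqVneq k ord0) => [->|kn0]; last by exists ord0; rewrite eq_sym.
  by exists (lift ord0 (Ordinal dpos)); rewrite eq_sym; exact: neq_lift.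
have [c c1 gapH] := gap Bu Pu' dpos.
pose eps := Num.min (1/2) ((c - 1) / 2).
have eps0 : 0 < eps by rewrite lt_min; apply/andP; split; lra.
have eps1 : eps <= 1/2 by rewrite ge_min lexx.
have epsc : 1 + 2 * eps <= c.
  have : eps <= (c - 1) / 2 by rewrite ge_min lexx orbT.
  lra.
have [v0 pv0] := prim_exists Bu dpos.
have TSne : TS B (Ssimp p) !=set0 by exists (Nn p v0)^-1; exact: prim_in_TS.
have Kub : ubound (TS B (Kp p k eps)) (lattice_diam (lattice_of B) (Ssimp p)).
  move=> t; exact: (Kp_bound Bu Pu' eps0 eps1 i0k dpos nopat gapH epsc).
apply: (comp (Kp p k eps)).
- exact: (Kp_body Pu' eps0 eps1 i0k cb).
- exact: S_Kp.
- exact: Kp_neq.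
apply/eqP; rewrite eq_le; apply/andP; split.
  apply: ge_sup => //; case: TSne => t Tt; exists t.
  exact: (TS_sub (S_Kp Pu' eps0)).
apply: ge_sup => // t Tt.
apply: ub_le_sup; first by exists (lattice_diam (lattice_of B) (Ssimp p)).
exact: (TS_sub (S_Kp Pu' eps0)).
Qed.
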